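(* Let $c,d>0$, $l\in\mathbb{Z}_+$ and $m\in\{0,\dots,l\}$. Then $$\lim_{q\uparrow1}R_{l-m}\big(q^{-l}-\tfrac dc q^{-l};\tfrac cd,2l;q\big)=\frac{(m+1)_{l-m}}{(l+m+1)_{l-m}}\Big(1+\frac dc\Big)^{l-m}R^{(m,m)}_{l-m}\Big(\frac{c-d}{c+d}\Big).$$
   Context: $(a)_n=a(a+1)\cdots(a+n-1)$. $R^{(\alpha,\beta)}_n$ is the Jacobi polynomial of degree $n$ normalized by $R^{(\alpha,\beta)}_n(1)=1$. Dual $q$-Krawtchouk value: $R_j(q^{-l}-\tfrac dc q^{-l};\tfrac cd,2l;q)=\sum_{k=0}^{j}\frac{(q^{-j};q)_k(q^{-l};q)_k(-\frac dc q^{-l};q)_k}{(q^{-2l};q)_k(q;q)_k}q^k$ with $(a;q)_k=\prod_{i=0}^{k-1}(1-aq^i)$. *)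

(* Defs.v *)
From HB Require Import structures.
From mathcomp Require Import all_boot all_order all_algebra.
From mathcomp Require Import all_classical all_reals all_analysis.
Set Implicit Arguments. Unset Strict Implicit. Unset Printing Implicit Defensive.
Import Order.TTheory GRing.Theory Num.Theory.
Local Open Scope ring_scope.

Definition poch {R : realType} (a : R) (n : nat) : R :=
  \prod_(i < n) (a + i%:R).

Definition qpoch {R : realType} (a q : R) (k : nat) : R :=
  \prod_(i < k) (1 - a * q ^+ i).

(* Normalized Jacobi polynomial R_n^{(al,be)}(x) = P_n^{(al,be)}(x) / P_n^{(al,be)}(1),
   via the standard hypergeometric definition
   P_n^{(al,be)}(x) = (al+1)_n/n! * 2F1(-n, n+al+be+1; al+1; (1-x)/2),
   so R_n^{(al,be)}(x) = 2F1(-n, n+al+be+1; al+1; (1-x)/2). *)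
Definition jacobiR {R : realType} (n : nat) (al be x : R) : R :=
  \sum_(k < n.+1)
    (poch (- n%:R) k * poch (n%:R + al + be + 1) k
       / (poch (al + 1) k * (k`!)%:R)) * ((1 - x) / 2) ^+ k.

(* The dual q-Krawtchouk value R_j(q^{-l} - (d/c) q^{-l}; c/d, 2l; q), as given:
   sum_{k=0}^j (q^{-j};q)_k (q^{-l};q)_k (-(d/c) q^{-l};q)_k / ((q^{-2l};q)_k (q;q)_k) q^k. *)
Definition dualqK {R : realType} (j l : nat) (c d q : R) : R :=
  \sum_(k < j.+1)
    (qpoch (q ^- j) q k * qpoch (q ^- l) q k * qpoch (- (d / c) * q ^- l) q k
       / (qpoch (q ^- (2 * l)) q k * qpoch q q k)) * q ^+ k.

(* Main.v *)
Require Import Defs.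
From HB Require Import structures.
From mathcomp Require Import all_boot all_order all_algebra.
From mathcomp Require Import all_classical all_reals all_analysis.
From mathcomp Require Import ring zify.
Import Order.TTheory GRing.Theory Num.Theory numFieldNormedType.Exports.
Local Open Scope ring_scope.
Local Open Scope classical_set_scope.

Set Implicit Arguments. Unset Strict Implicit. Unset Printing Implicit Defensive.
Section Comb.
Variable (R : comRingType) (v : R).

Lemma pascal_sum j (T : nat -> R) :
  \sum_(k < j.+2) 'C(j.+1,k)%:R * T k =
  \sum_(k < j.+1) 'C(j,k)%:R * T k + \sum_(k < j.+1) 'C(j,k)%:R * T k.+1.
Proof.
rewrite big_ord_recl /=.
under eq_bigr => i _ do rewrite binS natrD mulrDl.
rewrite big_split /= addrA; congr (_ + _).
have -> : \sum_(k < j.+1) 'C(j,k)%:R * T k = \sum_(k < j.+2) 'C(j,k)%:R * T k.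
  by rewrite [in RHS]big_ord_recr /= bin_small // mul0r addr0.
by rewrite [in RHS]big_ord_recl /= !bin0.
Qed.

Definition GA j n L := \sum_(k < j.+1) 'C(j,k)%:R * ('C(n+k, L)%:R * v^+k * (1-v)^+(j-k)).
Definition GB j n l := \sum_(k < j.+1) 'C(j,k)%:R * ('C(n+j-k, l)%:R * (v-1)^+k).

Lemma GA_rec j n L : GA j.+1 n L = (1-v) * GA j n L + v * GA j n.+1 L.
Proof.
rewrite /GA (pascal_sum j (fun k => 'C(n+k,L)%:R * v^+k * (1-v)^+(j.+1-k))) !big_distrr /=; congr (_ + _); apply: eq_bigr => k _.
  rewrite subSn; last by rewrite -ltnS.
  by rewrite exprS; ring.
by rewrite subSS addnS addSn exprS; ring.
Qed.

Lemma GB_rec j n l : GB j.+1 n l = GB j n.+1 l + (v-1) * GB j n l.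
Proof.
rewrite /GB (pascal_sum j (fun k => 'C(n+j.+1-k,l)%:R * (v-1)^+k)) !big_distrr /=; congr (_ + _); apply: eq_bigr => k _.
  by rewrite addnS addSn.
by rewrite addnS subSS exprS; ring.
Qed.

Lemma GA_pascal j n L : GA j n.+1 L.+1 = GA j n L.+1 + GA j n L.
Proof.
rewrite /GA -big_split /=; apply: eq_bigr => k _.
by rewrite addSn binS natrD; ring.
Qed.

Lemma GA_pascal0 j n : GA j n.+1 0 = GA j n 0.
Proof. by apply: eq_bigr => k _; rewrite !bin0. Qed.

Lemma GB0 j n : GB j n (n + j).+1 = 0.
Proof. apply: big1 => k _; rewrite (@bin_small (n+j-k)) ?mul0r ?mulr0 //; lia. Qed.

Lemma GBA j : forall n l L, (l + L = n + j)%N -> GB j n l = GA j n L.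
Proof.
elim: j => [|j IH] n l L e.
  rewrite /GA /GB !big_ord1 /= !addn0 !subn0 in e *.
  have -> : L = (n - l)%N by rewrite -e addKn.
  rewrite bin_sub //; [by rewrite !expr0 !mulr1 | by rewrite -e leq_addr].
rewrite GB_rec (IH n.+1 l L); last by rewrite e addnS addSn.
case: L e => [|L] e.
  rewrite addn0 in e; rewrite e addnS GB0 mulr0 addr0 GA_rec GA_pascal0; ring.
rewrite (IH n l L); last by move: e; rewrite addnS addnS => -[].
rewrite GA_rec !GA_pascal; ring.
Qed.
End Comb.
Section Fac.
Variable R : realType.

Lemma prodN k (x : nat -> R) : \prod_(i < k) - x i = (-1) ^+ k * \prod_(i < k) x i.
Proof.
elim: k => [|k IH]; first by rewrite !big_ord0 expr0 mul1r.
by rewrite !big_ord_recr /= IH exprSr; ring.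
Qed.

Lemma prod_const k (x : R) : \prod_(i < k) x = x ^+ k.
Proof. by rewrite prodr_const card_ord. Qed.

Lemma prod_fact k : \prod_(i < k) (i.+1%:R : R) = (k`!)%:R.
Proof.
elim: k => [|k IH]; first by rewrite big_ord0.
by rewrite big_ord_recr /= IH factS natrM mulrC.
Qed.

Lemma fact_neq0 n : ((n`!)%:R : R) != 0.
Proof. by rewrite pnatr_eq0 -lt0n fact_gt0. Qed.

Lemma prod_fall N k : (k <= N)%N ->
  \prod_(i < k) ((N - i)%:R : R) = (N`!)%:R / ((N - k)`!)%:R.
Proof.
elim: k => [|k IH] hk; first by rewrite big_ord0 subn0 divff // fact_neq0.
rewrite big_ord_recr /= IH; last exact: ltnW.
have -> : (N - k = (N - k.+1).+1)%N by lia.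
rewrite factS natrM.
have := fact_neq0 (N - k.+1); have := fact_neq0 N.
have : ((N - k.+1).+1%:R : R) != 0 by rewrite pnatr_eq0.
move=> h1 h2 h3; field; by rewrite h3 /= addrC natr1.
Qed.

Lemma poch_nat a k : poch (a.+1%:R : R) k = ((a + k)`!)%:R / (a`!)%:R.
Proof.
rewrite /poch; elim: k => [|k IH]; first by rewrite big_ord0 addn0 divff // fact_neq0.
rewrite big_ord_recr /= IH addnS factS natrM -natrD addSn.
have := fact_neq0 a => h; field; exact: h.
Qed.

Lemma poch_neg N k : (k <= N)%N ->
  poch (- (N%:R) : R) k = (-1) ^+ k * ((N`!)%:R / ((N - k)`!)%:R).
Proof.
move=> hk; rewrite /poch -prod_fall // -(prodN k (fun i => (N - i)%:R)); apply: eq_bigr => i _.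
rewrite natrB; first by ring.
by apply: leq_trans (ltnW (ltn_ord i)) hk.
Qed.
End Fac.
Section Alg.
Variable R : realType.

Definition Lval (z : R) j l := \sum_(k < j.+1)
  (\prod_(i < k) (-((j - i)%:R)) * \prod_(i < k) (-((l - i)%:R)) * (1 + z) ^+ k
     / (\prod_(i < k) (-((2 * l - i)%:R)) * (k`!)%:R)).

Lemma natr_bin n k : (k <= n)%N ->
  ('C(n, k)%:R : R) = (n`!)%:R / ((k`!)%:R * ((n - k)`!)%:R).
Proof.
move=> h; rewrite -(bin_fact h) !natrM.
have := fact_neq0 R k; have := fact_neq0 R (n - k) => h1 h2; field.
by rewrite h1 h2.
Qed.

Lemma lval_GB z j l n : (j <= l)%N -> (n + j = 2 * l)%N ->
  Lval z j l = ((l`!)%:R ^+ 2 / ((2 * l)`!)%:R) * GB (-z) j n l.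
Proof.
move=> hj hn; rewrite /Lval /GB big_distrr; apply: eq_bigr => [[k hk]] _ /=.
have hkj : (k <= j)%N by [].
rewrite (prodN k (fun i => (j - i)%:R)) (prodN k (fun i => (l - i)%:R)).
rewrite (prodN k (fun i => (2 * l - i)%:R)) !prod_fall; try lia.
rewrite hn natr_bin // natr_bin; last lia.
have -> : (2 * l - k - l = l - k)%N by lia.
have -> : -z - 1 = - (1 + z) by ring.
rewrite (exprNn (1 + z)).
have := fact_neq0 R k; have := fact_neq0 R (j - k); have := fact_neq0 R (l - k).
have := fact_neq0 R (2 * l); have := fact_neq0 R (2 * l - k); have := fact_neq0 R l.
have := signr_eq0 R k.
move=> h0 h1 h2 h3 h4 h5 h6; field.
by rewrite h0 h1 h2 h3 h4 h5 h6.
Qed.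

Lemma rhs_GA (c d : R) l m : 0 < c -> 0 < d -> (m <= l)%N ->
  poch (m.+1%:R) (l - m) / poch ((l + m).+1%:R) (l - m)
      * (1 + d / c) ^+ (l - m)
      * jacobiR (l - m) m%:R m%:R ((c - d) / (c + d))
  = ((l`!)%:R ^+ 2 / ((2 * l)`!)%:R) * GA (-(d / c)) (l - m) (l + m) l.
Proof.
move=> hc hd hm; rewrite /jacobiR.
have c0 : c != 0 by rewrite gt_eqF.
have cd0 : c + d != 0 by rewrite gt_eqF // addr_gt0.
have -> : (1 - (c - d) / (c + d)) / 2 = (d / c) / (1 + d / c) by field; rewrite c0 cd0.
set z := d / c.
have z0 : 0 < z by rewrite divr_gt0.
have w0 : 1 + z != 0 by rewrite gt_eqF // addr_gt0.
set j := (l - m)%N.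
have hj : (j + m = l)%N by rewrite subnK.
rewrite !poch_nat.
have -> : (m + j = l)%N by rewrite addnC.
have -> : (l + m + j = 2 * l)%N by lia.
rewrite /GA !big_distrr; apply: eq_bigr => [[k hk]] _ /=.
have hkj : (k <= j)%N by [].
have -> : (j%:R + m%:R + m%:R + 1 : R) = (l + m).+1%:R by rewrite -!natrD natr1; congr (_.+1%:R); lia.
rewrite natr1 !poch_nat poch_neg //.
rewrite (natr_bin hkj) natr_bin; last lia.
have -> : (l + m + k - l = m + k)%N by lia.
have -> : (1 - - z) = 1 + z by rewrite opprK.
have -> : (1 + z) ^+ j = (1 + z) ^+ (j - k) * (1 + z) ^+ k by rewrite -exprD subnK.
rewrite (exprNn z) expr_div_n.
have h9 : (1 + z) ^+ k != 0 by rewrite expf_neq0.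
have := fact_neq0 R k; have := fact_neq0 R (j - k); have := fact_neq0 R (l + m).
have := fact_neq0 R (2 * l); have := fact_neq0 R (m + k); have := fact_neq0 R l.
have := fact_neq0 R m; have := fact_neq0 R (l + m + k); have := signr_eq0 R k.
move=> h0 h1 h2 h3 h4 h5 h6 h7 h8; field.
by rewrite h2 h3 h4 h5 h6 h7 h8 h9.
Qed.
End Alg.
Section Lim.
Context (R : realType) (F : set_system R) {FF : Filter F}.

Lemma cvg_bprod k (f : nat -> R -> R) (a : nat -> R) :
  (forall i, f i x @[x --> F] --> a i) ->
  (fun x => \prod_(i < k) f i x) @ F --> \prod_(i < k) a i.
Proof.
move=> H; elim: k => [|k IH].
  rewrite big_ord0.
  have -> : (fun x => \prod_(i < 0) f i x) = (fun=> 1) by apply: funext => x; rewrite big_ord0.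
  exact: cvg_cst.
have -> : (fun x => \prod_(i < k.+1) f i x) = (fun x => (\prod_(i < k) f i x) * f k x).
  by apply: funext => x; rewrite big_ord_recr.
rewrite big_ord_recr; exact: cvgM.
Qed.

Lemma cvg_bsum k (f : nat -> R -> R) (a : nat -> R) :
  (forall i, (i < k)%N -> f i x @[x --> F] --> a i) ->
  (fun x => \sum_(i < k) f i x) @ F --> \sum_(i < k) a i.
Proof.
elim: k => [|k IH] H.
  rewrite big_ord0.
  have -> : (fun x => \sum_(i < 0) f i x) = (fun=> 0) by apply: funext => x; rewrite big_ord0.
  exact: cvg_cst.
have -> : (fun x => \sum_(i < k.+1) f i x) = (fun x => (\sum_(i < k) f i x) + f k x).
  by apply: funext => x; rewrite big_ord_recr.
rewrite big_ord_recr; apply: cvgD; last exact: H.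
by apply: IH => i hi; apply: H; rewrite ltnS ltnW.
Qed.

Lemma cvg_pow (n : nat) (f : R -> R) (a : R) : f x @[x --> F] --> a ->
  (fun x => f x ^+ n) @ F --> a ^+ n.
Proof.
move=> H; elim: n => [|n IH].
  have -> : (fun x => f x ^+ 0) = (fun=> 1) by apply: funext => x.
  exact: cvg_cst.
have -> : (fun x => f x ^+ n.+1) = (fun x => f x ^+ n * f x).
  by apply: funext => x; rewrite exprSr.
rewrite exprSr; exact: cvgM.
Qed.

Lemma cvg_inv (f : R -> R) (a : R) : a != 0 -> f x @[x --> F] --> a ->
  (fun x => (f x)^-1) @ F --> a^-1.
Proof. move=> a0 H; exact: cvgV. Qed.
End Lim.

Section Q.
Variable R : realType.
Implicit Types q : R.

Definition g n q := \sum_(t < n) q ^+ t.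
Definition A n i q := - (g (n - i) q / q ^+ (n - i)).

Lemma g_fact q n : (1 - q) * g n q = 1 - q ^+ n.
Proof.
elim: n => [|n IH]; first by rewrite /g big_ord0 mulr0 expr0 subrr.
by rewrite /g big_ord_recr /= mulrDr -/(g n q) IH exprSr; ring.
Qed.

Lemma factor_neg q n i : q != 0 -> (i < n)%N ->
  1 - q ^- n * q ^+ i = (1 - q) * A n i q.
Proof.
move=> q0 hi.
have e : q ^+ n = q ^+ (n - i) * q ^+ i by rewrite -exprD subnK // ltnW.
rewrite /A e mulrN mulrA g_fact.
have h1 : q ^+ (n - i) != 0 by rewrite expf_neq0.
have h2 : q ^+ i != 0 by rewrite expf_neq0.
by field; rewrite h1 h2.
Qed.

Lemma factor_pos q i : 1 - q * q ^+ i = (1 - q) * g i.+1 q.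
Proof. by rewrite g_fact exprS. Qed.

Lemma qpoch_neg q n k : q != 0 -> (k <= n)%N ->
  qpoch (q ^- n) q k = (1 - q) ^+ k * \prod_(i < k) A n i q.
Proof.
move=> q0 hk; rewrite /qpoch.
rewrite (eq_bigr (fun i : 'I_k => (1 - q) * A n i q)); last first.
  by move=> i _; apply: factor_neg => //; exact: leq_trans (ltn_ord i) hk.
by rewrite big_split /= prod_const.
Qed.

Lemma qpoch_pos q k : qpoch q q k = (1 - q) ^+ k * \prod_(i < k) g i.+1 q.
Proof.
rewrite /qpoch (eq_bigr (fun i : 'I_k => (1 - q) * g i.+1 q)).
  by rewrite big_split /= prod_const.
by move=> i _; apply: factor_pos.
Qed.

Lemma cancel5 (X a b e u v : R) : X != 0 ->
  (X * a) * (X * b) * e / ((X * u) * (X * v)) = a * b * e / (u * v).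
Proof.
move=> X0; have [uv0|uv0] := eqVneq (u * v) 0.
  have -> : X * u * (X * v) = X * X * (u * v) by ring.
  by rewrite uv0 !mulr0 !invr0 !mulr0.
have u0 : u != 0 by apply: contraNneq uv0 => ->; rewrite mul0r.
have v0 : v != 0 by apply: contraNneq uv0 => ->; rewrite mulr0.
by field; rewrite X0 u0 v0.
Qed.

Definition T j l (c d : R) k q := \prod_(i < k) A j i q * \prod_(i < k) A l i q
   * qpoch (- (d / c) * q ^- l) q k / (\prod_(i < k) A (2 * l) i q * \prod_(i < k) g i.+1 q)
   * q ^+ k.

Lemma dualqK_T j l c d q : (j <= l)%N -> 0 < q < 1 ->
  dualqK j l c d q = \sum_(k < j.+1) T j l c d k q.
Proof.
move=> hj /andP[q0 q1]; rewrite /dualqK; apply: eq_bigr => [[k hk]] _ /=.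
have hkj : (k <= j)%N by [].
have qn0 : q != 0 by rewrite gt_eqF.
have X0 : (1 - q) ^+ k != 0 by rewrite expf_neq0 // subr_eq0 eq_sym lt_eqF.
rewrite !qpoch_neg //; try lia.
by rewrite qpoch_pos cancel5.
Qed.

Lemma cvg_q : (fun q : R => q) @ (1 : R)^'- --> (1 : R).
Proof. exact: cvg_at_left_filter cvg_id. Qed.

Lemma cvg_g n : (fun q => g n q) @ (1 : R)^'- --> (n%:R : R).
Proof.
have -> : (n%:R : R) = \sum_(t < n) (1 : R) ^+ t.
  by rewrite (eq_bigr (fun=> 1)) ?sumr_const ?card_ord // => t _; rewrite expr1n.
rewrite /g; apply: (@cvg_bsum _ _ _ n (fun t q => q ^+ t)) => t _; exact: cvg_pow cvg_q.
Qed.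

Lemma cvg_A n i : (fun q => A n i q) @ (1 : R)^'- --> (- ((n - i)%:R) : R).
Proof.
have -> : (- ((n - i)%:R) : R) = - ((n - i)%:R * ((1 : R) ^+ (n - i))^-1).
  by rewrite expr1n invr1 mulr1.
have h : (1 : R) ^+ (n - i)%N != 0 by rewrite expr1n oner_eq0.
have H := (cvgN (cvgM (cvg_g (n:=(n - i)%N)) (cvgV h (cvg_pow (n:=(n - i)%N) cvg_q)))).
by rewrite /A; apply: H.
Qed.

Lemma cvg_T j l (c d : R) k : (k <= j)%N -> (j <= l)%N ->
  (fun q => T j l c d k q) @ (1 : R)^'- -->
  (\prod_(i < k) (-((j - i)%:R)) * \prod_(i < k) (-((l - i)%:R)) * (1 + d / c) ^+ k
     / (\prod_(i < k) (-((2 * l - i)%:R)) * (k`!)%:R) : R).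
Proof.
move=> hkj hjl.
have p1 := cvg_bprod (k := k) (fun i => cvg_A (n:=j) (i:=i)).
have p2 := cvg_bprod (k := k) (fun i => cvg_A (n:=l) (i:=i)).
have p4 := cvg_bprod (k := k) (fun i => cvg_A (n:=2 * l) (i:=i)).
have p5 := cvg_bprod (k := k) (fun i => cvg_g (n := i.+1)).
have p3 : (fun q => qpoch (- (d / c) * q ^- l) q k) @ (1 : R)^'- -->
    \prod_(i < k) (1 - (- (d / c) * (1 ^+ l)^-1) * (1 : R) ^+ i).
  rewrite /qpoch; apply: (@cvg_bprod _ _ _ k (fun i q => 1 - (- (d / c) * q ^- l) * q ^+ i) (fun i => 1 - (- (d / c) * (1 ^+ l)^-1) * 1 ^+ i)) => i.
  apply: cvgB; first exact: cvg_cst.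
  apply: cvgM; last exact: cvg_pow cvg_q.
  apply: cvgM; first exact: cvg_cst.
  apply: cvgV; first by rewrite expr1n oner_eq0.
  exact: cvg_pow cvg_q.
have FF : Filter ((1 : R)^'-) by exact: at_left_proper_filter.
move: p1 p2 p4 p5 => /(_ FF) p1 /(_ FF) p2 /(_ FF) p4 /(_ FF) p5.
have nz : \prod_(i < k) (-((2 * l - i)%:R : R)) * \prod_(i < k) (i.+1)%:R != 0.
  rewrite (prodN k (fun i => (2 * l - i)%:R)) prod_fall ?prod_fact; last lia.
  by rewrite !mulf_neq0 ?signr_eq0 ?fact_neq0 ?invr_neq0 ?fact_neq0.
have p6 : (fun x : R => x ^+ k) @ (1:R)^'- --> (1:R) ^+ k by exact: cvg_pow cvg_q.
have H := cvgM (cvgM (cvgM (cvgM p1 p2) p3) (cvgV nz (cvgM p4 p5))) p6.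
have -> : (\prod_(i < k) (-((j - i)%:R)) * \prod_(i < k) (-((l - i)%:R)) * (1 + d / c) ^+ k
     / (\prod_(i < k) (-((2 * l - i)%:R)) * (k`!)%:R) : R) =
   \prod_(i < k) (-((j - i)%:R)) * \prod_(i < k) (-((l - i)%:R)) *
     \prod_(i < k) (1 - (- (d / c) * (1 ^+ l)^-1) * (1 : R) ^+ i)
   / (\prod_(i < k) (-((2 * l - i)%:R)) * \prod_(i < k) (i.+1)%:R) * 1 ^+ k.
  rewrite !expr1n ?invr1 mulr1 prod_fact -prod_const; congr (_ * _ * _ / _).
  by apply: eq_bigr => i _; rewrite !expr1n ?invr1 !mulr1 opprK.
by rewrite /T; apply: H.
Qed.
End Q.

Lemma limit_part (R : realType) (c d : R) j l : (j <= l)%N ->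
  (fun q : R => dualqK j l c d q) @ (1 : R)^'- --> Lval (d / c) j l.
Proof.
move=> hjl.
have Hs : (fun q => \sum_(k < j.+1) T j l c d k q) @ (1 : R)^'- --> Lval (d / c) j l.
  rewrite /Lval; apply: (@cvg_bsum _ _ _ j.+1 (fun k q => T j l c d k q)
    (fun k => \prod_(i < k) (-((j - i)%:R)) * \prod_(i < k) (-((l - i)%:R)) * (1 + d / c) ^+ k
     / (\prod_(i < k) (-((2 * l - i)%:R)) * (k`!)%:R))) => k hk.
  by apply: cvg_T => //; rewrite -ltnS.
apply: cvg_trans Hs; apply: near_eq_cvg; near=> q.
rewrite dualqK_T //; apply/andP; split.
  near: q; exact: nbhs_left_gt ltr01.
near: q; exact: nbhs_left_lt.
Unshelve. all: by end_near.
Qed.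


Unset Implicit Arguments.

Theorem mainTheorem7 (R : realType) (c d : R) (l m : nat)
  (hc : 0 < c) (hd : 0 < d) (hl : (0 < l)%N) (hm : (m <= l)%N) :
  (fun q : R => dualqK (l - m) l c d q) @ (1 : R)^'- -->
    (poch (m.+1%:R) (l - m) / poch ((l + m).+1%:R) (l - m)
      * (1 + d / c) ^+ (l - m)
      * jacobiR (l - m) m%:R m%:R ((c - d) / (c + d)) : R).
Proof.
rewrite (rhs_GA hc hd hm).
have hj : (l - m <= l)%N by rewrite leq_subr.
rewrite -(GBA (l := l) _ (j := (l - m)%N) (n := (l + m)%N)); last by lia.
rewrite -(lval_GB _ hj); last by lia.
exact: limit_part.
Qed.
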